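(* Let $\rho=(\rho_1,\dots,\rho_s)$ be a composition of $n$ with exactly $r$ nonzero entries. Then: (a) There are exactly $r$ boxes of $\rho$ which can contain $n$ in a row-strict filling of $\rho$ (namely, the far-right boxes of the nonzero rows, each of which does occur). (b) If $T$ is a row-strict filling of $\rho$ and $n$ lies in the far-right box whose dimension-order label is $i\in\{1,\dots,r\}$, then $|D^T_n|=i-1$.
   Context: A composition $\rho=(\rho_1,\dots,\rho_s)$ of $n$ is a finite sequence of nonnegative integers summing to $n$; its diagram has $\rho_i$ boxes in row $i$ (rows numbered top to bottom) in columns $1,\dots,\rho_i$ (columns numbered left to right). A filling places $1,\dots,n$ bijectively into the boxes; it is row-strict if entries increase left to right in each row. Dimension-ordering: the far-right box of each nonzero row $i$ (the box in column $\rho_i$) gets a label in $\{1,\dots,r\}$ by ordering these $r$ boxes first by column, from the rightmost column to the leftmost, and within a single column from top to bottom; the $k$-th box in this order gets label $k$. Dimension pairs (with Hessenberg function $h(j)=j$): for a filling $T$, a pair $(a,b)$ of entries is a dimension pair if (1) $b>a$; (2) either $b$ lies in the same column as $a$ strictly below it, or $b$ lies in a column strictly to the left of the column of $a$; (3) if there is a box immediately to the right of $a$ in its row, containing $c$, then $b\le c$. For $j\in\{2,\dots,n\}$, $D^T_j$ denotes the set of dimension pairs of $T$ of the form $(a,j)$. *)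

(* Defs.v *)
From mathcomp Require Import all_boot.
Set Implicit Arguments. Unset Strict Implicit. Unset Printing Implicit Defensive.

(* Conventions: rows and columns are 0-indexed; a box is a pair (row, column). *)

Definition boxes (sh : seq nat) : seq (nat * nat) :=
  flatten [seq [seq (i, j) | j <- iota 0 (nth 0 sh i)] | i <- iota 0 (size sh)].

Definition entry (T : seq (seq nat)) (p : nat * nat) : nat :=
  nth 0 (nth [::] T p.1) p.2.

Definition is_filling (rho : seq nat) (n : nat) (T : seq (seq nat)) : bool :=
  (map size T == rho) && perm_eq (flatten T) (iota 1 n).

Definition row_strict (T : seq (seq nat)) : bool := all (sorted ltn) T.

Definition farright (rho : seq nat) : seq (nat * nat) :=
  [seq (i, (nth 0 rho i).-1) | i <- iota 0 (size rho) & 0 < nth 0 rho i].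

(* dimension order: rightmost column first, within a column top to bottom *)
Definition dim_rel (p q : nat * nat) : bool :=
  (q.2 < p.2) || ((p.2 == q.2) && (p.1 <= q.1)).

Definition dim_label (rho : seq nat) (p : nat * nat) : nat :=
  (index p (sort dim_rel (farright rho))).+1.

(* (a,b) is a dimension pair of T (Hessenberg function h(j) = j) *)
Definition dim_pair (T : seq (seq nat)) (a b : nat) : bool :=
  has (fun pa =>
    has (fun pb =>
      [&& entry T pa == a, entry T pb == b, a < b,
          ((pb.2 == pa.2) && (pa.1 < pb.1)) || (pb.2 < pa.2)
        & (pa.2.+1 < size (nth [::] T pa.1)) ==> (b <= entry T (pa.1, pa.2.+1))])
      (boxes (map size T)))
    (boxes (map size T)).

Definition D_card (n : nat) (T : seq (seq nat)) (j : nat) : nat :=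
  count (fun a => dim_pair T a j) (iota 1 n).

(* Main.v *)
Require Import Defs.
From mathcomp Require Import all_boot.
Set Implicit Arguments. Unset Strict Implicit. Unset Printing Implicit Defensive.

Lemma mem_boxes sh p : (p \in boxes sh) = (p.1 < size sh) && (p.2 < nth 0 sh p.1).
Proof.
case: p => i j /=; apply/flatten_mapP/andP => [[k]|[Hi Hj]].
  rewrite mem_iota /= add0n => Hk /mapP[j' Hj' [-> ->]].
  by move: Hj'; rewrite mem_iota add0n Hk => /= ->.
exists i; first by rewrite mem_iota.
by apply/mapP; exists j => //; rewrite mem_iota.
Qed.

Lemma mem_farright sh p : (p \in farright sh) =
  [&& p.1 < size sh, 0 < nth 0 sh p.1 & p.2 == (nth 0 sh p.1).-1].
Proof.
case: p => i j /=; apply/mapP/and3P => [[k]|[Hi Hx /eqP Hj]].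
  rewrite mem_filter mem_iota add0n => /andP[Hx /andP[_ Hk]] [-> ->]; by rewrite Hk Hx.
by exists i; [rewrite mem_filter mem_iota Hi Hx | rewrite Hj].
Qed.

Lemma farright_boxes sh p : p \in farright sh -> p \in boxes sh.
Proof.
rewrite mem_farright mem_boxes => /and3P[-> Hx /eqP ->] /=.
by rewrite prednK.
Qed.

Lemma uniq_farright sh : uniq (farright sh).
Proof.
rewrite /farright map_inj_in_uniq ?filter_uniq ?iota_uniq //.
by move=> a b _ _ [].
Qed.

Lemma size_farright sh : size (farright sh) = count (fun x => 0 < x) sh.
Proof.
rewrite size_map size_filter -{3}(mkseq_nth 0 sh) /mkseq count_map.
by [].
Qed.

Lemma size_nthT (T : seq (seq nat)) i : size (nth [::] T i) = nth 0 (map size T) i.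
Proof. by elim: T i => [|r T IH] [|i] //=. Qed.

Section Fill.
Variables (rho : seq nat) (n : nat) (T : seq (seq nat)).
Hypothesis HT : is_filling rho n T.

Lemma fill_shape : map size T = rho.
Proof. by case/andP: HT => /eqP. Qed.

Lemma fill_perm : perm_eq (flatten T) (iota 1 n).
Proof. by case/andP: HT. Qed.

Lemma entry_flatten i j : j < nth 0 rho i ->
  entry T (i, j) = nth 0 (flatten T) (flatten_index (shape T) i j).
Proof.
move=> Hj; have Hs : shape T = rho by rewrite /shape fill_shape.
by rewrite nth_flatten Hs flatten_indexKl // flatten_indexKr.
Qed.

Lemma entry_range p : p \in boxes rho -> 0 < entry T p <= n.
Proof.
case: p => i j; rewrite mem_boxes /= => /andP[Hi Hj].
have Hsz : size T = size rho by rewrite -fill_shape size_map.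
have Hin : entry T (i, j) \in flatten T.
  apply/flattenP; exists (nth [::] T i); first by apply: mem_nth; rewrite Hsz.
  by apply: mem_nth; rewrite size_nthT fill_shape.
by move: Hin; rewrite (perm_mem fill_perm) mem_iota add1n ltnS.
Qed.

Lemma entry_inj p q : p \in boxes rho -> q \in boxes rho ->
  entry T p = entry T q -> p = q.
Proof.
case: p => i j; case: q => i' j'; rewrite !mem_boxes /= => /andP[_ Hj] /andP[_ Hj'].
rewrite !entry_flatten //.
have Hs : shape T = rho by rewrite /shape fill_shape.
have Hu : uniq (flatten T) by rewrite (perm_uniq fill_perm) iota_uniq.
have Hsz : size (flatten T) = sumn rho by rewrite size_flatten Hs.
move/eqP; rewrite nth_uniq // ?Hsz ?Hs ?flatten_indexP // => /eqP E.
have := flatten_indexKl Hj; have := flatten_indexKr Hj.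
by rewrite E flatten_indexKl // flatten_indexKr // => -> ->.
Qed.

End Fill.

Fixpoint cfill (c : nat) (s : seq nat) : seq (seq nat) :=
  if s is k :: s' then iota c k :: cfill (c + k) s' else [::].

Lemma cfill_size c s : map size (cfill c s) = s.
Proof. by elim: s c => [|k s IH] c //=; rewrite size_iota IH. Qed.

Lemma cfill_flatten c s : flatten (cfill c s) = iota c (sumn s).
Proof. by elim: s c => [|k s IH] c //=; rewrite IH iotaD. Qed.

Lemma cfill_sorted c s : all (sorted ltn) (cfill c s).
Proof. by elim: s c => [|k s IH] c //=; rewrite iota_ltn_sorted IH. Qed.

Lemma construct A x B : 0 < x ->
  exists T, [/\ is_filling (A ++ x :: B) (sumn (A ++ x :: B)) T, row_strict T
             & entry T (size A, x.-1) = sumn (A ++ x :: B)].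
Proof.
move=> Hx.
set sA := sumn A; set sB := sumn B.
exists (cfill 1 A ++ iota (1 + sA + sB) x :: cfill (1 + sA) B); split.
- apply/andP; split.
    by rewrite map_cat /= !cfill_size size_iota.
  rewrite flatten_cat /= !cfill_flatten sumn_cat /= -/sA -/sB.
  rewrite [x + sB]addnC iotaD iotaD perm_cat2l.
  by rewrite perm_catC.
- by rewrite /row_strict all_cat /= !cfill_sorted iota_ltn_sorted.
rewrite /entry /= nth_cat.
have -> : size (cfill 1 A) = size A by rewrite -(size_map size) cfill_size.
rewrite ltnn subnn /= nth_iota; last by rewrite prednK.
rewrite sumn_cat /= -/sA -/sB; case: x Hx => // x' _ /=.
by rewrite add1n !addSn addnS -addnA (addnC sB).
Qed.

Lemma dim_rel_trans : transitive dim_rel.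
Proof.
move=> [a2 b2] [a1 b1] [a3 b3]; rewrite /dim_rel /=.
case/orP => [H1|/andP[/eqP E1 H1]]; case/orP => [H2|/andP[/eqP E2 H2]].
- by rewrite (ltn_trans H2 H1).
- by rewrite -E2 H1.
- by rewrite E1 H2.
- by rewrite E1 E2 eqxx (leq_trans H1 H2) orbT.
Qed.

Lemma dim_rel_anti p q : dim_rel p q -> dim_rel q p -> p = q.
Proof.
case: p => a1 b1; case: q => a2 b2; rewrite /dim_rel /=.
case/orP => [H1|/andP[/eqP E1 H1]]; case/orP => [H2|/andP[/eqP E2 H2]].
- by move: (ltn_trans H1 H2); rewrite ltnn.
- by move: H1; rewrite E2 ltnn.
- by move: H2; rewrite E1 ltnn.
- by rewrite E1; congr pair; apply/eqP; rewrite eqn_leq H1 H2.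
Qed.

Lemma dim_rel_total : total dim_rel.
Proof.
move=> [a1 b1] [a2 b2]; rewrite /dim_rel /=.
case: (ltngtP b1 b2) => H; rewrite ?H ?orbT //=.
by rewrite leq_total.
Qed.

Lemma count_mem_sub (T : eqType) (s S : seq T) : uniq s -> uniq S ->
  {subset S <= s} -> count (mem S) s = size S.
Proof.
move=> Us US Hsub; rewrite -size_filter; apply: perm_size.
apply: uniq_perm; rewrite ?filter_uniq // => x.
rewrite mem_filter; apply/andP/idP => [[]//|Hx]; split=> //; exact: Hsub.
Qed.

Lemma index_count (s : seq (nat * nat)) p : uniq s -> sorted dim_rel s -> p \in s ->
  count (fun q => (q != p) && dim_rel q p) s = index p s.
Proof.
move=> Us Ss Ps.
have Hi : index p s <= size s by apply: ltnW; rewrite index_mem.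
rewrite -(size_takel Hi) -(count_mem_sub Us) ?take_uniq //; last first.
  by move=> x; apply: mem_take.
apply: eq_in_count => q Hq /=.
rewrite in_take_leq //.
case: (ltngtP (index q s) (index p s)) => H.
- rewrite (sorted_ltn_index dim_rel_trans Ss q p Hq Ps H) andbT.
  by apply/eqP => E; move: H; rewrite E ltnn.
- apply/negP => /andP[Hne Hr].
  have := sorted_ltn_index dim_rel_trans Ss p q Ps Hq H => Hr'.
  by move: Hne; rewrite (dim_rel_anti Hr Hr') eqxx.
- by rewrite -(nth_index p Hq) H nth_index // eqxx.
Qed.

Lemma partA rho n p : sumn rho = n -> p \in boxes rho ->
  (exists T, [/\ is_filling rho n T, row_strict T & entry T p = n])
  <-> p \in farright rho.
Proof.
move=> Hn; case: p => i j; rewrite mem_boxes /= => /andP[Hi Hj]; split.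
  move=> [T [HT HS He]].
  rewrite mem_farright /= Hi (leq_ltn_trans _ Hj) //=.
  apply/negPn/negP => Hne.
  have Hj1 : j.+1 < nth 0 rho i.
    move: Hj Hne; case: (nth 0 rho i) => // x /=; rewrite ltnS leq_eqVlt.
    by case/orP => [->//|].
  have Hsz : size T = size rho by rewrite -(fill_shape HT) size_map.
  have Hrow : sorted ltn (nth [::] T i).
    by apply: (allP HS); apply: mem_nth; rewrite Hsz.
  have Hs : size (nth [::] T i) = nth 0 rho i by rewrite size_nthT (fill_shape HT).
  have := sorted_ltn_nth ltn_trans 0 Hrow j j.+1.
  rewrite !inE Hs Hj Hj1 => /(_ isT isT (ltnSn j)).
  have := entry_range HT (p := (i, j.+1)); rewrite mem_boxes /= Hi Hj1.
  move=> /(_ isT) /andP[_ Hle].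
  rewrite /entry /= in He Hle; rewrite He => Hlt.
  by move: (leq_trans Hlt Hle); rewrite ltnn.
rewrite mem_farright /= => /and3P[_ Hx /eqP ->].
have E : take i rho ++ nth 0 rho i :: drop i.+1 rho = rho.
  by rewrite -(drop_nth 0 Hi) cat_take_drop.
have [T [H1 H2 H3]] := construct (take i rho) (drop i.+1 rho) Hx.
rewrite E size_takel ?(ltnW Hi) // in H1 H3.
by exists T; split; rewrite -?Hn.
Qed.

Section PartB.
Variables (rho : seq nat) (n : nat) (T : seq (seq nat)) (p : nat * nat).
Hypothesis HT : is_filling rho n T.
Hypothesis Hp : p \in farright rho.
Hypothesis Hpn : entry T p = n.

Let Q := [seq q <- farright rho | (q != p) && dim_rel q p].

Lemma dim_pair_n a : dim_pair T a n = (a \in map (entry T) Q).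
Proof.
have Pb : p \in boxes rho by apply: farright_boxes.
have Hsh := fill_shape HT.
apply/idP/idP.
  rewrite /dim_pair Hsh; case/hasP => pa Hpa /hasP[pb Hpb].
  case/and5P => /eqP Ea /eqP Eb Han Hcol Hright.
  have Epb : pb = p by apply: (entry_inj HT) => //; rewrite Eb Hpn.
  subst pb.
  have Hne : pa != p.
    by apply/eqP => E; move: Han; rewrite -Ea E Hpn ltnn.
  apply/mapP; exists pa => //; rewrite mem_filter Hne /=.
  move: Hpa Hcol Hright; case: pa {Ea Hne} => i j; rewrite mem_boxes /= => /andP[Hi Hj].
  case: p Hp Pb Hpn => [i' j'] _ Pb' Hpn' /= Hcol Hright.
  rewrite mem_farright /= Hi (leq_ltn_trans _ Hj) //=.
  apply/andP; split.
    rewrite /dim_rel /=; case/orP: Hcol => [/andP[/eqP -> /ltnW ->]|->].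
      by rewrite eqxx orbT.
    by [].
  apply/negPn/negP => Hne.
  have Hj1 : j.+1 < nth 0 rho i.
    move: Hj Hne; case: (nth 0 rho i) => // x /=; rewrite ltnS leq_eqVlt.
    by case/orP => [->//|].
  move: Hright; rewrite size_nthT Hsh Hj1 /= => Hle.
  have Hb1 : (i, j.+1) \in boxes rho by rewrite mem_boxes /= Hi.
  have /andP[_ Hle2] := entry_range HT Hb1.
  have Ee : entry T (i, j.+1) = entry T (i', j').
    by rewrite Hpn'; apply/eqP; rewrite eqn_leq Hle2.
  case: (entry_inj HT Hb1 Pb' Ee) => <- <- in Hcol.
  by move: Hcol; rewrite ltnn andbF ltnNge leqnSn.
move=> /mapP[q]; rewrite mem_filter => /andP[/andP[Hqp Hrel] HqF] ->.
have Qb : q \in boxes rho by apply: farright_boxes.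
rewrite /dim_pair Hsh; apply/hasP; exists q => //.
apply/hasP; exists p => //.
rewrite eqxx Hpn eqxx /=.
have /andP[_ Hle] := entry_range HT Qb.
rewrite ltn_neqAle Hle andbT.
apply/and3P; split.
- by apply/eqP => E; move: Hqp; rewrite (entry_inj HT Qb Pb) ?eqxx // E Hpn.
- move: Hrel Hqp; case: q {Qb Hle HqF} => a1 b.
  rewrite /dim_rel /=.
  case/orP => [->|/andP[/eqP Ebd Hac]]; first by rewrite orbT.
  move=> Hne; rewrite Ebd eqxx ltnn orbF /= ltn_neqAle Hac andbT.
  by apply/eqP => Eac; move: Hne; rewrite Eac Ebd -surjective_pairing eqxx.
- move: HqF; case: q {Qb Hle Hqp Hrel} => a1 b; rewrite mem_farright /=.
  case/and3P => _ Hx /eqP ->; rewrite size_nthT Hsh prednK // ltnn.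
  by [].
Qed.

Lemma partB : D_card n T n = (dim_label rho p).-1.
Proof.
rewrite /D_card /dim_label /=.
rewrite (eq_in_count (a2 := mem (map (entry T) Q))); last first.
  by move=> a _; rewrite dim_pair_n.
rewrite count_mem_sub ?iota_uniq //.
- rewrite size_map size_filter.
  have Hperm : perm_eq (sort dim_rel (farright rho)) (farright rho) by rewrite perm_sort.
  move/permP: Hperm => <-.
  apply: index_count.
  + by rewrite sort_uniq uniq_farright.
  + exact: sort_sorted dim_rel_total _.
  + by rewrite mem_sort.
- rewrite map_inj_in_uniq ?filter_uniq ?uniq_farright //.
  move=> x y; rewrite !mem_filter => /andP[_ Hx] /andP[_ Hy].
  by apply: (entry_inj HT); apply: farright_boxes.
- move=> a /mapP[q]; rewrite mem_filter => /andP[_ Hq] ->.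
  have /andP[H0 H1] := entry_range HT (farright_boxes Hq).
  by rewrite mem_iota H0 add1n ltnS.
Qed.
End PartB.

Theorem mainTheorem2 (n : nat) (rho : seq nat) (r : nat) :
  sumn rho = n -> r = count (fun x => 0 < x) rho ->
  (* (a) *)
  ((forall p, p \in boxes rho ->
      ((exists T, [/\ is_filling rho n T, row_strict T & entry T p = n])
       <-> p \in farright rho))
   /\ uniq (farright rho) /\ size (farright rho) = r)
  /\
  (* (b) *)
  (forall T, is_filling rho n T -> row_strict T ->
   forall p, p \in farright rho -> entry T p = n ->
   D_card n T n = (dim_label rho p).-1).
Proof.
move=> Hn Hr; split; [split; [|split] |].
- by move=> p Hp; apply: partA.
- exact: uniq_farright.
- by rewrite size_farright Hr.
- by move=> T HT _ p Hp Hpn; apply: partB.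
Qed.
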